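(* Let $c\ge 3$ be an integer with distinct prime factors $q_1,\dots,q_\omega$. Then $$G_c \;=\; R(c)^{\varphi(c)/2}\prod_{\substack{2\le p<c,\ p \text{ prime}\\ (p,c)=1}} p^{E_c(p)}.$$
   Context: For a positive integer $n$, $R(n)$ denotes its radical, the product of the distinct primes dividing $n$ (with $R(1)=1$). $\varphi$ is Euler's totient function. For an integer $c\ge 3$, consider all pairs of positive integers $(a,b)$ with $a+b=c$, $a<b$, $\gcd(a,b)=1$; there are $\varphi(c)/2$ of them, and $G_c$ is the product of $R(abc)$ over all these pairs. For a positive integer $n$ with distinct prime factors $q_1,\dots,q_\omega$ ($\omega=0$ if $n=1$) and a real number $x\neq 0$, define $$E_n(x)=\sum_{S\subseteq\{1,\dots,\omega\}}(-1)^{|S|}\left\lfloor \frac{n}{x\prod_{i\in S}q_i}\right\rfloor,$$ i.e. $\lfloor n/x\rfloor-\sum_i\lfloor n/(xq_i)\rfloor+\sum_{i<j}\lfloor n/(xq_iq_j)\rfloor-\cdots+(-1)^\omega\lfloor n/(xq_1\cdots q_\omega)\rfloor$. *)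

(* Defs.v *)
From mathcomp Require Import all_boot all_order all_algebra.
Set Implicit Arguments. Unset Strict Implicit. Unset Printing Implicit Defensive.
Import Order.TTheory GRing.Theory Num.Theory.

Definition radical (n : nat) : nat := \prod_(p <- primes n) p.

Definition Gc (c : nat) : nat :=
  \prod_(1 <= a < c | (a < c - a) && coprime a (c - a)) radical (a * (c - a) * c).

(* For positive integers the
   floor of n/(x*d) is the Euclidean quotient n %/ (x*d). *)
Definition E (n x : nat) : int :=
  \sum_(S : {set 'I_(size (primes n))})
     (-1) ^+ #|S| * ((n %/ (x * \prod_(i in S) nth 0 (primes n) i))%N)%:Z.

(* Main.v *)
Require Import Defs.
From mathcomp Require Import all_boot all_order all_algebra zify.
Import Order.TTheory GRing.Theory Num.Theory.

Lemma count_mult (m d : nat) : (0 < d)%N ->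
  (\sum_(1 <= k < m.+1) (d %| k) = m %/ d)%N.
Proof.
move=> d0; elim: m => [|m IH]; first by rewrite big_geq // div0n.
by rewrite big_nat_recr //= IH divnS // addnC.
Qed.

Lemma dvd_prod_primes (s : seq nat) (r : seq nat) k :
  uniq s -> all prime s -> uniq r -> all (fun i => i < size s)%N r ->
  (\prod_(i <- r) nth 0%N s i %| k) = all (fun i => nth 0%N s i %| k) r.
Proof.
move=> us ps; elim: r => [|j r IH] /=; first by rewrite big_nil dvd1n.
case/andP=> jr ur /andP[js rs]; rewrite big_cons Gauss_dvd ?IH //.
have pj : prime (nth 0%N s j) by apply: (allP ps); rewrite mem_nth.
rewrite prime_coprime // Euclid_dvd_prod //; apply/negP.
rewrite big_has => /hasP[i ir].
have pi : prime (nth 0%N s i) by apply: (allP ps); rewrite mem_nth // (allP rs).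
rewrite dvdn_prime2 // nth_uniq //; last exact: (allP rs).
by move/eqP=> ji; move: jr; rewrite ji ir.
Qed.


Section NatPart.
Set Implicit Arguments. Unset Strict Implicit.

Lemma rad_bound n B : 0 < n -> n < B ->
  radical n = \prod_(0 <= p < B | prime p && (p %| n)) p.
Proof.
move=> n0 nB; rewrite /radical -[RHS]big_filter; apply: perm_big.
apply: uniq_perm; first exact: primes_uniq.
  by apply: filter_uniq; apply: iota_uniq.
move=> p; rewrite /index_iota subn0 mem_primes mem_filter mem_iota add0n n0 /=.
case pp: (prime p) => //=; case pn: (p %| n) => //=.
by rewrite (leq_ltn_trans (dvdn_leq n0 pn) nB).
Qed.

Lemma rad_mul m n : 0 < m -> 0 < n -> coprime m n ->
  radical (m * n) = radical m * radical n.
Proof.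
move=> m0 n0 cmn.
have mn0 : 0 < m * n by rewrite muln_gt0 m0.
have mB : m < (m * n).+1 by rewrite ltnS leq_pmulr.
have nB : n < (m * n).+1 by rewrite ltnS leq_pmull.
rewrite (rad_bound mn0 (ltnSn _)) (rad_bound m0 mB) (rad_bound n0 nB).
rewrite (bigID (fun p => p %| m)) /=; congr (_ * _); apply: eq_bigl => p.
  case pm: (p %| m); rewrite ?andbT ?andbF //.
  by rewrite (dvdn_mulr _ pm) andbT.
case pp: (prime p) => //=; rewrite Euclid_dvdM //.
case pm: (p %| m); case pn: (p %| n) => //=.
have h2 : coprime p p := coprime_dvdr pn (coprime_dvdl pm cmn).
move: h2; rewrite /coprime gcdnn => /eqP p1; by move: pp; rewrite p1.
Qed.

Lemma sum_mult p m F : 0 < p ->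
  \sum_(1 <= a < m.+1 | p %| a) F a = \sum_(1 <= k < (m %/ p).+1) F (p * k).
Proof.
move=> p0; elim: m => [|m IH]; first by rewrite div0n !big_geq.
rewrite big_mkcond big_nat_recr //= -big_mkcond IH divnS //.
case pm: (p %| m.+1) => /=; last by rewrite addn0 add0n.
have e : p * (m %/ p).+1 = m.+1.
  have -> : (m %/ p).+1 = m.+1 %/ p by rewrite divnS // pm.
  by rewrite mulnC divnK.
by rewrite add1n [RHS]big_nat_recr //= e.
Qed.

Lemma cop_sub a c : a <= c -> coprime a (c - a) = coprime a c.
Proof. by move=> ac; rewrite /coprime -{2}(subnKC ac) gcdnDl. Qed.

Lemma cop_sub2 a c : a <= c -> coprime (c - a) c = coprime a c.
Proof. by move=> ac; rewrite /coprime -{2}(subnK ac) gcdnDl gcdnC; exact: cop_sub ac. Qed.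

Lemma not_half a c : 3 <= c -> coprime a c -> a != c - a.
Proof.
move=> c3 cac; apply/eqP => e.
have c2 : c = a * 2 by lia.
move: cac; rewrite c2 coprimeMr /coprime gcdnn => /andP[/eqP a1 _]; lia.
Qed.

Lemma split_pairs (R : Type) (idx : R) (op : Monoid.com_law idx) c F : 3 <= c ->
  \big[op/idx]_(1 <= a < c | (a < c - a) && coprime a (c - a)) op (F a) (F (c - a))
  = \big[op/idx]_(1 <= a < c | coprime a c) F a.
Proof.
move=> c3; rewrite big_split /= [in RHS](bigID (fun a => a < c - a)) /=.
congr (op _ _).
  apply: congr_big_nat => // a /andP[a1 ac].
  by rewrite cop_sub ?(ltnW ac) // andbC.
rewrite big_nat_rev /=.
apply: congr_big_nat => // a.
  move=> /andP[a1 ac].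
  have -> : 1 + c - a.+1 = c - a by lia.
  have -> : c - (c - a) = a by lia.
  rewrite [coprime (c - a) a]coprime_sym cop_sub ?(ltnW ac) //.
  case cac: (coprime a c); rewrite ?andbT ?andbF //.
  rewrite -leqNgt ltn_neqAle eq_sym (not_half c3 cac) //=.
move=> /andP[_ /andP[a1 ac]].
have -> : 1 + c - a.+1 = c - a by lia.
by have -> : c - (c - a) = a by lia.
Qed.

Lemma prod_const (I : Type) (r : seq I) (P : pred I) x :
  \prod_(i <- r | P i) x = x ^ (\sum_(i <- r | P i) 1).
Proof.
symmetry; rewrite (big_morph (expn x) (expnD x) (expn0 x)).
by apply: eq_bigr => i _; exact: expn1.
Qed.

Lemma rad_prod c : 3 <= c ->
  \prod_(1 <= a < c | coprime a c) radical a =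
  \prod_(2 <= p < c | prime p && coprime p c) p ^ (\sum_(1 <= k < (c %/ p).+1) coprime k c).
Proof.
move=> c3.
transitivity (\prod_(1 <= a < c | coprime a c) \prod_(0 <= p < c | prime p) (if p %| a then p else 1)).
  apply: congr_big_nat => // a /andP[_ /andP[a1 ac]]; rewrite -big_mkcondr; exact: rad_bound.
rewrite exchange_big_nat /=.
rewrite big_ltn_cond; last lia.
have -> : prime 0 = false by [].
rewrite big_ltn_cond; last lia.
have -> : prime 1 = false by [].
rewrite [RHS]big_mkcondr; apply: congr_big_nat => // p /andP[pp _].
rewrite -big_mkcondr prod_const.
case cop: (coprime p c).
  congr (p ^ _).
  have p0 : 0 < p by apply: prime_gt0.
  transitivity (\sum_(1 <= a < c | p %| a) coprime a c).
    rewrite [LHS]big_mkcond [RHS]big_mkcond /=; apply: eq_bigr => a _; by case: (coprime a c); case: (p %| a).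
  have -> : \sum_(1 <= a < c | p %| a) coprime a c = \sum_(1 <= a < c.+1 | p %| a) coprime a c.
    rewrite [RHS]big_mkcond big_nat_recr /=; last lia.
    rewrite -big_mkcond /coprime gcdnn.
    have -> : (c == 1) = false by lia.
    by case: (p %| c); rewrite addn0.
  rewrite sum_mult //; apply: eq_bigr => k _.
  by rewrite coprimeMl cop.
rewrite big1 // => a /andP[qa pa].
by move: cop; rewrite (coprime_dvdl pa qa).
Qed.

Lemma Gc_nat c : 3 <= c ->
  Gc c = radical c ^ (totient c %/ 2) *
    \prod_(2 <= p < c | prime p && coprime p c) p ^ (\sum_(1 <= k < (c %/ p).+1) coprime k c).
Proof.
move=> c3; rewrite /Gc -rad_prod //.
transitivity (\prod_(1 <= a < c | (a < c - a) && coprime a (c - a)) (radical a * radical (c - a) * radical c)).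
  apply: congr_big_nat => // a /andP[/andP[_ cop] /andP[a1 ac]].
  have ca : coprime a c by rewrite -cop_sub // ltnW.
  have cb : coprime (c - a) c by rewrite cop_sub2 // ltnW.
  have b0 : 0 < c - a by lia.
  by rewrite rad_mul ?rad_mul ?muln_gt0 ?a1 ?b0 ?coprimeMl ?ca ?cb //; lia.
rewrite big_split /= prod_const mulnC; congr (_ * _).
  congr (_ ^ _).
  have H := split_pairs addn (fun _ => 1) c3.
  rewrite big_split /= in H.
  have T : totient c = \sum_(1 <= a < c | coprime a c) 1.
    rewrite totient_count_coprime big_ltn_cond; last lia.
    rewrite /coprime gcdn0; have -> : (c == 1) = false by lia.
    rewrite /= [RHS]big_mkcond /=; apply: eq_bigr => a _. by rewrite gcdnC; case: (gcdn a c == 1).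
  by rewrite T -H addnn -muln2 mulnK.
exact: (split_pairs muln radical c3).
Qed.

End NatPart.

Local Open Scope ring_scope.
Lemma prod_ind (I : Type) (r : seq I) (b : I -> bool) :
  \prod_(i <- r) ((b i : nat)%:Z) = (all b r : nat)%:Z.
Proof. by elim: r => [|i r IH]; rewrite ?big_nil ?big_cons ?IH //=; case: (b i); rewrite ?mul1r ?mul0r. Qed.



Lemma coprime_all k n : (0 < k)%N -> (0 < n)%N ->
  all (fun p => ~~ (p %| k)%N) (primes n) = coprime k n.
Proof.
move=> k0 n0; rewrite coprime_has_primes // -all_predC; apply: eq_in_all => p.
by rewrite mem_primes /= mem_primes k0 => /and3P[-> _ _].
Qed.

Lemma incl_excl n k : (0 < k)%N -> (0 < n)%N ->
  \sum_(S : {set 'I_(size (primes n))})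
     (-1) ^+ #|S| * (((\prod_(i in S) nth 0%N (primes n) i)%N %| k)%N : nat)%:Z
  = (coprime k n : nat)%:Z.
Proof.
move=> k0 n0; set q := primes n.
have Hd : forall S : {set 'I_(size q)},
   (((\prod_(i in S) nth 0%N q i)%N %| k)%N : nat)%:Z
   = \prod_(i in S) ((nth 0%N q i %| k)%N : nat)%:Z.
  move=> S; rewrite -!big_enum -(big_map val xpredT (fun j => nth 0%N q j)).
  rewrite -(big_map val xpredT (fun j => ((nth 0%N q j %| k)%N : nat)%:Z)).
  rewrite prod_ind dvd_prod_primes //.
  - exact: primes_uniq.
  - by apply/allP => p; rewrite mem_primes => /andP[].
  - by rewrite map_inj_uniq ?enum_uniq //; apply: val_inj.
  - by apply/allP => j /mapP[i _ ->]; apply: ltn_ord.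
under eq_bigr => S _ do rewrite Hd -prodrN.
have := @bigA_distr int 0 1 *%R +%R _ (fun i : 'I_(size q) => - ((nth 0%N q i %| k)%N : nat)%:Z) (fun=> 1).
move=> H; rewrite (eq_bigr (fun S : {set 'I_(size q)} => \prod_i (if i \in S then - ((nth 0%N q i %| k)%N : nat)%:Z else 1))); last first.
  by move=> S _; rewrite big_mkcond.
rewrite -H.
rewrite -coprime_all // -prod_ind (big_nth 0%N) big_mkord.
by apply: eq_bigr => i _; case: (_ %| _)%N.
Qed.

Lemma E_count n x : (0 < n)%N -> (0 < x)%N ->
  E n x = (\sum_(1 <= k < (n %/ x).+1) coprime k n)%N%:Z.
Proof.
move=> n0 x0; rewrite /E.
have dpos : forall S : {set 'I_(size (primes n))}, (0 < \prod_(i in S) nth 0%N (primes n) i)%N.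
  move=> S; apply: prodn_gt0 => i; apply: prime_gt0.
  by have := mem_nth 0%N (ltn_ord i); rewrite mem_primes => /andP[].
rewrite (eq_bigr (fun S : {set 'I_(size (primes n))} =>
   \sum_(1 <= k < (n %/ x).+1) (-1) ^+ #|S| *
      (((\prod_(i in S) nth 0%N (primes n) i)%N %| k)%N : nat)%:Z)); last first.
  by move=> S _; rewrite divnMA -(count_mult (n %/ x) _ (dpos S)) -natz natr_sum mulr_sumr; apply: eq_bigr => k _; rewrite natz.
rewrite exchange_big /= -natz natr_sum; apply: eq_big_nat => k /andP[k0 _].
by rewrite (@incl_excl n k k0 n0) natz.
Qed.


Lemma zR (n : nat) : ((Posz n)%:~R : rat) = n%:R.
Proof. by []. Qed.

Theorem theorem1 (c : nat) (hc : (3 <= c)%N) :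
  (Gc c)%:Q =
    ((radical c) ^ (totient c %/ 2))%N%:Q *
    \prod_(2 <= p < c | prime p && coprime p c) (p%:Q) ^ (E c p).
Proof.
rewrite Gc_nat // !zR natrM; congr (_ * _).
rewrite natr_prod; apply: eq_bigr => p /andP[pp _].
rewrite E_count; last exact: prime_gt0.
  by rewrite zR -exprnP natrX.
by apply: leq_trans hc.
Qed.
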